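(* Let $G$ be a finitely generated group and let $A$ be a finite symmetric generating set of $G$. Equip $G$ with the word metric $\delta_A$. Then for every real $r\geqslant 0$ there exists a minimal $r$-net in the metric space $(G,\delta_A)$.
   Context: A set $A\subseteq G$ is symmetric if $A=A^{-1}$. The word metric is $\delta_A(x,y)=$ the least $n\geqslant 0$ such that $x^{-1}y$ is a product of $n$ elements of $A\cup\{1\}$. In a metric space $(X,\delta)$, an $r$-net is a subset $N\subseteq X$ such that for every $x\in X$ there is $z\in N$ with $\delta(x,z)\leqslant r$; a minimal $r$-net is an $r$-net no proper subset of which is an $r$-net. *)

(* Defs.v *)
From Stdlib Require Import Reals List.
Open Scope R_scope.

Section GroupDefs.
Context {G : Type} (mul : G -> G -> G) (inv : G -> G) (e : G).

Definition is_group : Prop :=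
  (forall x y z, mul x (mul y z) = mul (mul x y) z) /\
  (forall x, mul e x = x) /\ (forall x, mul x e = x) /\
  (forall x, mul (inv x) x = e) /\ (forall x, mul x (inv x) = e).

Definition lprod (l : list G) : G := fold_right mul e l.

Definition finite_set (A : G -> Prop) : Prop :=
  exists l : list G, forall x, A x <-> In x l.

Definition symmetric_set (A : G -> Prop) : Prop :=
  forall x, A x <-> A (inv x).

Definition generates (A : G -> Prop) : Prop :=
  forall g, exists l : list G,
    (forall a, In a l -> A a \/ A (inv a)) /\ lprod l = g.

Definition prod_of_len (A : G -> Prop) (n : nat) (g : G) : Prop :=
  exists l : list G, length l = n /\ (forall a, In a l -> A a \/ a = e) /\ lprod l = g.

(* word_metric A x y n : delta_A(x,y) = n, i.e. n is the least natural number
   such that x^{-1} y is a product of n elements of A ∪ {1} *)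
Definition word_metric (A : G -> Prop) (x y : G) (n : nat) : Prop :=
  prod_of_len A n (mul (inv x) y) /\
  (forall m, prod_of_len A m (mul (inv x) y) -> (n <= m)%nat).

Definition is_r_net (A : G -> Prop) (r : R) (N : G -> Prop) : Prop :=
  forall x, exists z n, N z /\ word_metric A x z n /\ INR n <= r.

Definition is_minimal_r_net (A : G -> Prop) (r : R) (N : G -> Prop) : Prop :=
  is_r_net A r N /\
  forall N' : G -> Prop,
    (forall x, N' x -> N x) -> (exists x, N x /\ ~ N' x) -> ~ is_r_net A r N'.

End GroupDefs.

(* Main.v *)
Require Import Defs.
From Stdlib Require Import Reals List.
From Stdlib Require Import Classical ClassicalEpsilon Lia Cantor Wf_nat Lra.
Open Scope R_scope.

Section Proof.
Variables (G : Type) (mul : G -> G -> G) (inv : G -> G) (e : G).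
Hypothesis HG : is_group mul inv e.

Lemma inv_uniq a b : mul a b = e -> b = inv a.
Proof.
  destruct HG as [As [L1 [R1 [IL IR]]]]. intro H.
  rewrite <- (L1 b), <- (IL a), <- As, H, R1. reflexivity.
Qed.

Lemma inv_mul a b : inv (mul a b) = mul (inv b) (inv a).
Proof.
  destruct HG as [As [L1 [R1 [IL IR]]]].
  symmetry. apply inv_uniq.
  rewrite As, <- (As a b), IR, R1, IR. reflexivity.
Qed.

Lemma inv_inv a : inv (inv a) = a.
Proof.
  destruct HG as [As [L1 [R1 [IL IR]]]].
  symmetry. apply inv_uniq. apply IL.
Qed.

Lemma inv_e : inv e = e.
Proof.
  destruct HG as [As [L1 [R1 [IL IR]]]].
  symmetry. apply inv_uniq. apply L1.
Qed.

Lemma lprod_app l1 l2 : lprod mul e (l1 ++ l2) = mul (lprod mul e l1) (lprod mul e l2).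
Proof.
  destruct HG as [As [L1 [R1 [IL IR]]]].
  induction l1 as [|a l1 IH]; simpl.
  - rewrite L1. reflexivity.
  - unfold lprod in *. rewrite IH, As. reflexivity.
Qed.

Lemma lprod_inv l : lprod mul e (rev (map inv l)) = inv (lprod mul e l).
Proof.
  destruct HG as [As [L1 [R1 [IL IR]]]].
  induction l as [|a l IH]; simpl.
  - rewrite inv_e. reflexivity.
  - rewrite lprod_app, IH. unfold lprod. simpl. rewrite R1.
    rewrite inv_mul. reflexivity.
Qed.

Variable A : G -> Prop.
Hypothesis Asym : symmetric_set inv A.

Lemma pol_inv m g : prod_of_len mul e A m g -> prod_of_len mul e A m (inv g).
Proof.
  intros [l [Hl [Hin Hp]]]. exists (rev (map inv l)). split; [|split].
  - rewrite length_rev, length_map. exact Hl.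
  - intros a Ha. apply in_rev in Ha. apply in_map_iff in Ha.
    destruct Ha as [b [<- Hb]]. destruct (Hin b Hb) as [Ab | ->].
    + left. apply (proj1 (Asym b)). exact Ab.
    + right. apply inv_e.
  - rewrite lprod_inv, Hp. reflexivity.
Qed.

Variable r : R.
Hypothesis hr : 0 <= r.

Definition close x y := exists m, prod_of_len mul e A m (mul (inv x) y) /\ INR m <= r.

Lemma close_sym x y : close x y -> close y x.
Proof.
  intros [m [Hm Hr]]. exists m. split; auto.
  apply pol_inv in Hm. rewrite inv_mul, inv_inv in Hm. exact Hm.
Qed.

Lemma least_nat (P : nat -> Prop) m : P m -> exists n, P n /\ forall k, P k -> (n <= k)%nat.
Proof.
  induction m as [m IH] using (well_founded_induction lt_wf). intro Pm.
  destruct (classic (exists k, (k < m)%nat /\ P k)) as [[k [Hk Pk]]|Hn].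
  - exact (IH k Hk Pk).
  - exists m. split; auto. intros k Pk. destruct (Nat.lt_ge_cases k m); auto.
    exfalso. apply Hn. eauto.
Qed.

Lemma close_wm x y : close x y -> exists n, word_metric mul inv e A x y n /\ INR n <= r.
Proof.
  intros [m [Hm Hr]].
  destruct (least_nat (fun n => prod_of_len mul e A n (mul (inv x) y)) m Hm) as [n [Pn Hn]].
  exists n. split. split; auto.
  apply Rle_trans with (INR m); auto. apply le_INR. auto.
Qed.

Variable f : nat -> G.
Hypothesis fsurj : forall x, exists n, f n = x.

Definition sepd x L := forall y, In y L -> ~ close x y /\ ~ close y x.

Fixpoint Lst (n : nat) : list G :=
  match n with
  | O => nil
  | S n => if excluded_middle_informative (sepd (f n) (Lst n)) then f n :: Lst n else Lst n
  end.

Lemma Lst_mono n m : (n <= m)%nat -> incl (Lst n) (Lst m).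
Proof.
  induction 1. apply incl_refl.
  simpl. destruct excluded_middle_informative; auto.
  apply incl_tl. auto.
Qed.

Lemma Lst_sep n x y : In x (Lst n) -> In y (Lst n) -> x <> y -> ~ close x y.
Proof.
  revert x y. induction n; simpl; intros x y Hx Hy Hxy. contradiction.
  destruct excluded_middle_informative as [s|s]; auto.
  destruct Hx as [<-|Hx]; destruct Hy as [<-|Hy].
  - congruence.
  - apply (s y Hy).
  - apply (s x Hx).
  - auto.
Qed.

Lemma Lst_cover n : In (f n) (Lst (S n)) \/ exists y, In y (Lst n) /\ close (f n) y.
Proof.
  simpl. destruct excluded_middle_informative as [s|s].
  - left. left. reflexivity.
  - right. apply not_all_ex_not in s. destruct s as [y Hy].
    apply imply_to_and in Hy. destruct Hy as [Hy Hc].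
    exists y. split; auto.
    destruct (classic (close (f n) y)) as [c|c]; auto.
    destruct (classic (close y (f n))) as [c'|c']. apply close_sym; auto.
    exfalso. tauto.
Qed.

Lemma main_net : exists N : G -> Prop, is_minimal_r_net mul inv e A r N.
Proof.
  destruct HG as [As [L1 [R1 [IL IR]]]].
  exists (fun x => exists n, In x (Lst n)). split.
  - intro x. destruct (classic (exists n, In x (Lst n))) as [Hx|Hx].
    + exists x, 0%nat. split; auto. split; [split|].
      * exists nil. simpl. split; [reflexivity|split]. intros a []. rewrite IL. reflexivity.
      * intros; lia.
      * simpl. lra.
    + destruct (fsurj x) as [n <-].
      destruct (Lst_cover n) as [H|[y [Hy Hc]]].
      * exfalso. eauto.
      * destruct (close_wm _ _ Hc) as [k [Hk Hr]]. exists y, k. eauto.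
  - intros N' Hsub [x [[nx Hx] Hnx]] Hnet.
    destruct (Hnet x) as [z [k [Hz [Hw Hk]]]].
    destruct (Hsub z Hz) as [nz Hz'].
    apply (Lst_sep (Nat.max nx nz) x z).
    + apply (Lst_mono nx); auto; lia.
    + apply (Lst_mono nz); auto; lia.
    + intros ->. contradiction.
    + exists k. split; auto. apply Hw.
Qed.

End Proof.

Fixpoint words {G : Type} (l : list G) (n : nat) : list (list G) :=
  match n with
  | O => nil :: nil
  | S n => flat_map (fun w => map (fun a => a :: w) l) (words l n)
  end.

Lemma words_in {G : Type} (l w : list G) : (forall a, In a w -> In a l) -> In w (words l (length w)).
Proof.
  induction w as [|a w IH]; simpl; intros H. auto.
  apply in_flat_map. exists w. split. apply IH; auto.
  apply in_map_iff. exists a. auto.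
Qed.

Theorem corollary2p7 (G : Type) (mul : G -> G -> G) (inv : G -> G) (e : G)
  (HG : is_group mul inv e) (A : G -> Prop)
  (Afin : finite_set A) (Asym : symmetric_set inv A) (Agen : generates mul inv e A)
  (r : R) (hr : 0 <= r) :
  exists N : G -> Prop, is_minimal_r_net mul inv e A r N.
Proof.
  destruct Afin as [l Hl].
  set (f := fun n => let p := of_nat n in nth (snd p) (map (lprod mul e) (words l (fst p))) e).
  apply (main_net G mul inv e HG A Asym r hr f).
  intro x. destruct (Agen x) as [w [Hw Hp]].
  assert (Hin : In x (map (lprod mul e) (words l (length w)))).
  { rewrite <- Hp. apply in_map. apply words_in. intros a Ha.
    apply Hl. destruct (Hw a Ha); auto. apply (proj2 (Asym a)); auto. }
  destruct (In_nth _ _ e Hin) as [i [_ Hi]].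
  exists (to_nat (length w, i)). unfold f. rewrite cancel_of_to. simpl. exact Hi.
Qed.
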